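(* Fix $\delta_1,\delta_2>0$ small with $\delta_1/\delta_2\in\mathbb{N}$ and $\delta_2<\delta_1^3$. There exists a function $g$ such that for all $k\in\mathbb{N}$, $\varepsilon>0$, every $m\in\mathbb{N}\cup\{\infty\}$ with $m>g(k,\varepsilon)$, and every group homomorphism $f:\ell^1(\mathbb{N}_{\le m};\mathbb{R}/\mathbb{Z})\to(\mathbb{R}/\mathbb{Z})^k$, there exists $s\in S_m$ with $|f(s)|<\varepsilon$ (i.e. $S_m$ meets the Bohr set $\{b: |f(b)|<\varepsilon\}$).
   Context: $\|x\|_{\mathbb{R}/\mathbb{Z}}$ is the distance from $x$ to the nearest integer. For $m\in\mathbb{N}$, $\ell^1(\mathbb{N}_{\le m};\mathbb{R}/\mathbb{Z})$ is the group $(\mathbb{R}/\mathbb{Z})^m$ with norm $\sum_{i\le m}\|a_i\|_{\mathbb{R}/\mathbb{Z}}$; for $m=\infty$ it is $\ell^1(\mathbb{N};\mathbb{R}/\mathbb{Z})$, the group of sequences $(a_1,a_2,\dots)$ in $\mathbb{R}/\mathbb{Z}$ with $\sum_i\|a_i\|_{\mathbb{R}/\mathbb{Z}}<\infty$ under coordinatewise addition. For $y\in(\mathbb{R}/\mathbb{Z})^k$, $|y|$ is the maximum of the $\mathbb{R}/\mathbb{Z}$-norms of its coordinates. Let $\eta_m=2^{-100m}$ for $m\in\mathbb{N}$ and $\eta_\infty=0$. $S_m$ is the set of $(a_1,a_2,\dots)\in\ell^1(\mathbb{N}_{\le m};\mathbb{R}/\mathbb{Z})$ for which there is an index $i$ with: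 (1) $a_i\in(-\delta_1-(2-\eta_m)\delta_2,\,-\delta_1+(2-\eta_m)\delta_2)\subset\mathbb{R}/\mathbb{Z}$; (2) for all $j\ne i$, $a_j\in(-(2-\eta_m)\delta_2,(2-\eta_m)\delta_2)\subset\mathbb{R}/\mathbb{Z}$; (3) $\delta_1-(2-\eta_m)\delta_2<\sum_{j\ne i}\|a_j\|_{\mathbb{R}/\mathbb{Z}}<\delta_1+(2-\eta_m)\delta_2$. *)

(* Defs.v *)
From Stdlib Require Import Reals Lra.
From Coquelicot Require Import Coquelicot.
Open Scope R_scope.

(* x is (the representative of) 0 in R/Z *)
Definition isInt (x : R) : Prop := exists n : Z, x = IZR n.

Definition distZ (x : R) : R :=
  Rmin (x - IZR (Int_part x)) (IZR (Int_part x) + 1 - x).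

Definition inArc (x lo hi : R) : Prop := exists n : Z, lo < x + IZR n < hi.

(* m in N ∪ {∞}: Some n = n, None = ∞ *)
Definition natinf := option nat.

(* index i is a coordinate of l^1(N_{<=m}); coordinates are numbered 0,1,...  *)
Definition idx (m : natinf) (i : nat) : Prop :=
  match m with Some n => (i < n)%nat | None => True end.

Fixpoint fsum (f : nat -> R) (n : nat) : R :=
  match n with O => 0 | S p => fsum f p + f p end.

(* Elements of l^1(N_{<=m}; R/Z) are represented by real sequences a : nat -> R
   (coordinatewise representatives); for finite m the coordinates >= m are 0 mod 1,
   for m = ∞ the sequence of norms is summable. *)
Definition inL1 (m : natinf) (a : nat -> R) : Prop :=
  match m with
  | Some n => forall i, (n <= i)%nat -> isInt (a i)
  | None => ex_series (fun i => distZ (a i))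
  end.

Definition eqL1 (a b : nat -> R) : Prop := forall i, isInt (a i - b i).

(* A group homomorphism f : l^1(N_{<=m}; R/Z) -> (R/Z)^k, given on representatives:
   F a j (j < k) is a representative of the j-th coordinate of f([a]). *)
Definition isHomRep (m : natinf) (k : nat) (F : (nat -> R) -> nat -> R) : Prop :=
  (forall a b, inL1 m a -> inL1 m b -> eqL1 a b ->
     forall j, (j < k)%nat -> isInt (F a j - F b j)) /\
  (forall a b, inL1 m a -> inL1 m b ->
     forall j, (j < k)%nat -> isInt (F (fun i => a i + b i) j - F a j - F b j)).

Definition eta (m : natinf) : R :=
  match m with Some n => / 2 ^ (100 * n) | None => 0 end.

Definition sumOthers (m : natinf) (a : nat -> R) (i : nat) : R :=
  let g := fun j => if Nat.eq_dec j i then 0 else distZ (a j) in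
  match m with Some n => fsum g n | None => Series g end.

Definition inS (d1 d2 : R) (m : natinf) (a : nat -> R) : Prop :=
  let w := (2 - eta m) * d2 in
  exists i, idx m i /\
    inArc (a i) (- d1 - w) (- d1 + w) /\
    (forall j, idx m j -> j <> i -> inArc (a j) (- w) w) /\
    d1 - w < sumOthers m a i < d1 + w.

Definition gtN (m : natinf) (g : nat) : Prop :=
  match m with Some n => (g < n)%nat | None => True end.

(* Main.v *)
Require Import Defs.
From Stdlib Require Import Reals Lra Lia List Classical ZArith.
From Coquelicot Require Import Coquelicot.
Open Scope R_scope.

Lemma fsum_ext f h n : (forall j, (j < n)%nat -> f j = h j) -> fsum f n = fsum h n.
Proof. induction n; simpl; intros H; auto. rewrite IHn by (intros; apply H; lia). rewrite H by lia; auto. Qed.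

Lemma fsum_zero_tail f M n : (M <= n)%nat -> (forall j, (M <= j)%nat -> f j = 0) -> fsum f n = fsum f M.
Proof. induction n; intros Hn H. replace M with 0%nat by lia; auto.
  destruct (Nat.eq_dec M (S n)). subst; auto. simpl. rewrite IHn by (auto; lia). rewrite H by lia. ring. Qed.

Lemma sum_n_fsum a n : sum_n a n = fsum a (S n).
Proof. induction n. rewrite sum_O. simpl. symmetry; apply Rplus_0_l. rewrite sum_Sn, IHn. reflexivity. Qed.

Lemma is_series_fin a M : (forall j, (M <= j)%nat -> a j = 0) -> is_series a (fsum a M).
Proof. intros H. unfold is_series.
  change (is_lim_seq (sum_n a) (fsum a M)).
  apply is_lim_seq_ext_loc with (u := fun _ => fsum a M); [|apply is_lim_seq_const].
  exists M. intros n Hn. rewrite sum_n_fsum. symmetry. apply fsum_zero_tail; auto. Qed.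

Lemma Int_part_small x : 0 <= x < 1 -> Int_part x = 0%Z.
Proof. intros H. destruct (base_Int_part x) as [H1 H2].
  assert (IZR (Int_part x) < 1) by lra. assert (-1 < IZR (Int_part x)) by lra.
  apply lt_IZR in H0. apply lt_IZR in H3. lia. Qed.

Lemma distZ_small x : 0 <= x <= 1/2 -> distZ x = x.
Proof. intros H. unfold distZ. rewrite Int_part_small by lra. simpl.
  rewrite Rmin_left; lra. Qed.

Lemma distZ_le x n : distZ x <= Rabs (x - IZR n).
Proof. unfold distZ. destruct (base_Int_part x) as [H1 H2].
  destruct (Z.le_gt_cases n (Int_part x)) as [h|h].
  - apply IZR_le in h. eapply Rle_trans. apply Rmin_l. rewrite Rabs_right; lra.
  - assert (IZR (Int_part x + 1) <= IZR n) by (apply IZR_le; lia).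
    rewrite plus_IZR in H. eapply Rle_trans. apply Rmin_r. rewrite Rabs_left1; lra. Qed.

Lemma isInt_plus a b : isInt a -> isInt b -> isInt (a + b).
Proof. intros [n ->] [p ->]. exists (n+p)%Z. rewrite plus_IZR; auto. Qed.
Lemma isInt_opp a : isInt a -> isInt (- a).
Proof. intros [n ->]. exists (-n)%Z. rewrite opp_IZR; auto. Qed.
Lemma isInt_eq a b : a = b -> isInt a -> isInt b.
Proof. intros ->; auto. Qed.
Lemma isInt_0 : isInt 0. Proof. exists 0%Z; auto. Qed.

Lemma filter_split (b : nat -> nat) K (l : list nat) :
  length (filter (fun n => Nat.ltb (b n) (S K)) l) =
  (length (filter (fun n => Nat.ltb (b n) K) l) + length (filter (fun n => Nat.eqb (b n) K) l))%nat.
Proof. induction l; simpl; auto.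
  destruct (Nat.ltb_spec (b a) (S K)); destruct (Nat.ltb_spec (b a) K); destruct (Nat.eqb_spec (b a) K);
  simpl; try lia. Qed.

Lemma filter_all (f : nat -> bool) l : (forall n, In n l -> f n = true) -> length (filter f l) = length l.
Proof. induction l; simpl; intros H; auto. rewrite H by auto. simpl. rewrite IHl; auto. Qed.

Lemma php1 (b : nat -> nat) N r (l : list nat) :
  (forall n, (b n < N)%nat) -> (N * r < length l)%nat ->
  exists v, (r < length (filter (fun n => Nat.eqb (b n) v) l))%nat.
Proof. intros Hb Hl. apply NNPP. intros Hc.
  assert (Hv : forall v, (length (filter (fun n => Nat.eqb (b n) v) l) <= r)%nat).
  { intros v. apply Nat.nlt_ge. intros h. apply Hc. eauto. }
  assert (forall K, (length (filter (fun n => Nat.ltb (b n) K) l) <= K * r)%nat).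
  { induction K. simpl. clear -b. induction l; simpl; auto.
    rewrite filter_split. specialize (Hv K). simpl. lia. }
  specialize (H N). rewrite filter_all in H. lia. intros n _. apply Nat.ltb_lt; auto. Qed.

Lemma phpK (box : nat -> nat -> nat) N (HN : forall n c, (box n c < N)%nat) :
  forall K q l, (N ^ K * q < length l)%nat -> NoDup l ->
  exists l', incl l' l /\ NoDup l' /\ (q < length l')%nat /\
    forall c, (c < K)%nat -> forall n n', In n l' -> In n' l' -> box n c = box n' c.
Proof. induction K; intros q l Hl Hnd.
  - exists l. split. apply incl_refl. split; auto. split. simpl in Hl; lia. intros; lia.
  - destruct (IHK (N * q)%nat l) as [l1 [Hi [Hn [Hlen Hc]]]]; auto.
    { replace (N ^ K * (N * q))%nat with (N ^ S K * q)%nat; auto. simpl. ring. }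
    destruct (php1 (fun n => box n K) N q l1) as [v Hv]; auto.
    exists (filter (fun n => Nat.eqb (box n K) v) l1). split.
    { intros x Hx. apply filter_In in Hx. apply Hi; tauto. }
    split. apply NoDup_filter; auto. split; auto.
    intros c Hc' n n' H1 H2. apply filter_In in H1. apply filter_In in H2.
    destruct (Nat.eq_dec c K). subst. destruct H1 as [_ H1]; destruct H2 as [_ H2].
    apply Nat.eqb_eq in H1; apply Nat.eqb_eq in H2. congruence.
    apply Hc; try lia; tauto. Qed.

Definition u (d2 : R) (t : nat) : nat -> R := fun n => if Nat.eqb n t then d2 else 0.

Fixpoint Sf (d2 : R) (i : nat) (js : list nat) : nat -> R :=
  match js with
  | nil => fun _ => 0
  | j :: js' => fun n => (u d2 j n - u d2 i n) + Sf d2 i js' n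
  end.

Definition indf (d2 : R) (js : list nat) : nat -> R :=
  fun n => if in_dec Nat.eq_dec n js then d2 else 0.

Lemma Sf_val d2 i js : NoDup (i :: js) -> forall n,
  Sf d2 i js n = if Nat.eqb n i then - (INR (length js) * d2) else indf d2 js n.
Proof. induction js as [|j js IH]; intros Hnd n; cbn [Sf length].
  - unfold indf; simpl. destruct (n =? i); lra.
  - assert (Hnd' : NoDup (i :: js)). { inversion Hnd; subst. constructor. simpl in H1; tauto.
      inversion H2; auto. }
    rewrite IH by auto. unfold u, indf. inversion Hnd; subst. inversion H2; subst.
    destruct (Nat.eqb_spec n i); destruct (Nat.eqb_spec n j); subst.
    + simpl in H1; tauto.
    + rewrite S_INR. lra.
    + destruct (in_dec Nat.eq_dec j (j :: js)) as [_|h]; [|simpl in h; tauto].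
      destruct (in_dec Nat.eq_dec j js); [tauto|lra].
    + destruct (in_dec Nat.eq_dec n (j :: js)) as [h|h]; destruct (in_dec Nat.eq_dec n js) as [h'|h'];
      simpl in h; try lra; try tauto. destruct h; [congruence|tauto]. Qed.

Lemma Sf_supp d2 i js M : (i < M)%nat -> (forall t, In t js -> (t < M)%nat) ->
  forall n, (M <= n)%nat -> Sf d2 i js n = 0.
Proof. intros Hi Hjs n Hn. induction js as [|j js IH]; simpl; auto.
  rewrite IH by (intros; apply Hjs; simpl; auto). unfold u.
  destruct (Nat.eqb_spec n j). subst. specialize (Hjs j (or_introl eq_refl)). lia.
  destruct (Nat.eqb_spec n i). lia. lra. Qed.

Lemma inL1_supp m M a : (forall M', m = Some M' -> (M <= M')%nat) ->
  (forall n, (M <= n)%nat -> a n = 0) -> inL1 m a.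
Proof. intros Hm Ha. destruct m as [M'|]; simpl.
  - intros i Hi. rewrite Ha. apply isInt_0. specialize (Hm M' eq_refl). lia.
  - exists (fsum (fun i => distZ (a i)) M). apply is_series_fin. intros j Hj.
    rewrite Ha by auto. apply distZ_small. lra. Qed.

Lemma fsum_plus f h n : fsum (fun j => f j + h j) n = fsum f n + fsum h n.
Proof. induction n; simpl. ring. rewrite IHn. ring. Qed.

Lemma fsum_u_out d2 t n : (n <= t)%nat -> fsum (u d2 t) n = 0.
Proof. induction n; simpl; intros; auto. rewrite IHn by lia. unfold u.
  destruct (Nat.eqb_spec n t). lia. ring. Qed.

Lemma fsum_u d2 t n : (t < n)%nat -> fsum (u d2 t) n = d2.
Proof. induction n; simpl; intros H. lia. destruct (Nat.eq_dec t n). subst.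
  rewrite fsum_u_out by lia. unfold u. rewrite Nat.eqb_refl. ring.
  rewrite IHn by lia. unfold u. destruct (Nat.eqb_spec n t). lia. ring. Qed.

Lemma fsum_ind d2 js M : NoDup js -> (forall t, In t js -> (t < M)%nat) ->
  fsum (indf d2 js) M = INR (length js) * d2.
Proof. induction js as [|j js IH]; intros Hnd Hjs.
  - simpl. unfold indf. simpl. clear. induction M as [|M IHM]; simpl; [ring| rewrite IHM; ring].
  - inversion Hnd; subst.
    rewrite (fsum_ext _ (fun n => u d2 j n + indf d2 js n)).
    + rewrite fsum_plus, IH, fsum_u. simpl length. rewrite S_INR. ring.
      apply Hjs; simpl; auto. auto. intros; apply Hjs; simpl; auto.
    + intros n _. unfold indf, u. destruct (Nat.eqb_spec n j).
      * subst. destruct (in_dec Nat.eq_dec j (j::js)) as [_|h]; [|simpl in h; tauto].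
        destruct (in_dec Nat.eq_dec j js); [tauto|ring].
      * destruct (in_dec Nat.eq_dec n (j :: js)) as [h|h]; destruct (in_dec Nat.eq_dec n js) as [h'|h'];
        simpl in h; try ring; try tauto. destruct h; [congruence|tauto]. Qed.

Lemma isInt_sub a b : isInt a -> isInt b -> isInt (a - b).
Proof. intros. unfold Rminus. apply isInt_plus; auto. apply isInt_opp; auto. Qed.

Lemma u_supp d2 t M : (t < M)%nat -> forall n, (M <= n)%nat -> u d2 t n = 0.
Proof. intros. unfold u. destruct (Nat.eqb_spec n t); [lia|auto]. Qed.

Definition Rs (F : (nat -> R) -> nat -> R) d2 i c (js : list nat) :=
  fold_right (fun t acc => (F (u d2 t) c - F (u d2 i) c) + acc) 0 js.

Lemma F_rel m k F d2 i M (HF : isHomRep m k F) (Hm : forall M', m = Some M' -> (M <= M')%nat)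
  (Hi : (i < M)%nat) : forall js, (forall t, In t js -> (t < M)%nat) ->
  forall c, (c < k)%nat -> isInt (F (Sf d2 i js) c - Rs F d2 i c js).
Proof. destruct HF as [HF1 HF2]. induction js as [|j js IH]; intros Hjs c Hc.
  - simpl. set (z := fun _ : nat => 0).
    assert (Hz : inL1 m z) by (apply (inL1_supp m M); auto).
    pose proof (HF2 z z Hz Hz c Hc) as H1.
    assert (Hzz : inL1 m (fun n => z n + z n)) by (apply (inL1_supp m M); auto; intros; unfold z; ring).
    assert (H2 : isInt (F (fun n => z n + z n) c - F z c)).
    { apply HF1; auto. intros n. unfold z. exists 0%Z. simpl. ring. }
    apply (isInt_eq ((F (fun n => z n + z n) c - F z c) - (F (fun n => z n + z n) c - F z c - F z c))).
    ring. apply isInt_sub; auto.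
  - assert (Hj : (j < M)%nat) by (apply Hjs; simpl; auto).
    assert (IH' := IH (fun t h => Hjs t (or_intror h)) c Hc).
    set (a := fun n => u d2 j n - u d2 i n). set (b := Sf d2 i js).
    assert (Hui : inL1 m (u d2 i)) by (apply (inL1_supp m M); [exact Hm|apply (u_supp d2 i M); auto]).
    assert (Huj : inL1 m (u d2 j)) by (apply (inL1_supp m M); [exact Hm|apply (u_supp d2 j M); auto]).
    assert (Ha : inL1 m a).
    { apply (inL1_supp m M); auto. intros; unfold a; rewrite (u_supp d2 j M), (u_supp d2 i M) by auto; ring. }
    assert (Hb : inL1 m b).
    { apply (inL1_supp m M); auto. apply Sf_supp; auto. intros; apply Hjs; simpl; auto. }
    assert (Hai : inL1 m (fun n => a n + u d2 i n)).
    { apply (inL1_supp m M); auto. intros; unfold a; rewrite (u_supp d2 j M), (u_supp d2 i M) by auto; ring. }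
    pose proof (HF2 a b Ha Hb c Hc) as X1.
    pose proof (HF2 a (u d2 i) Ha Hui c Hc) as X3.
    assert (X4 : isInt (F (fun n => a n + u d2 i n) c - F (u d2 j) c)).
    { apply HF1; auto. intros n. unfold a. exists 0%Z. simpl. ring. }
    change (Sf d2 i (j :: js)) with (fun n => a n + b n). simpl Rs. fold (Rs F d2 i c js).
    apply (isInt_eq ((F (fun n => a n + b n) c - F a c - F b c) + (F b c - Rs F d2 i c js)
       - (F (fun n => a n + u d2 i n) c - F a c - F (u d2 i) c)
       + (F (fun n => a n + u d2 i n) c - F (u d2 j) c))).
    ring. apply isInt_plus; [apply isInt_sub; [apply isInt_plus|]|]; auto. Qed.

Lemma frac_bounds x : 0 <= x - IZR (Int_part x) < 1.
Proof. destruct (base_Int_part x). lra. Qed.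

Lemma Int_part_nonneg y : 0 <= y -> (0 <= Int_part y)%Z.
Proof. intros H. destruct (base_Int_part y) as [H1 H2].
  assert (-1 < IZR (Int_part y)) by lra. apply lt_IZR in H0. lia. Qed.

Lemma box_lt N x : (0 < N)%nat -> 0 <= x < 1 -> (Z.to_nat (Int_part (INR N * x)) < N)%nat.
Proof. intros HN Hx. assert (HNr : 0 < INR N) by (apply lt_0_INR; auto).
  destruct (base_Int_part (INR N * x)) as [H1 H2].
  assert (IZR (Int_part (INR N * x)) < IZR (Z.of_nat N)).
  { rewrite <- INR_IZR_INZ. nra. }
  apply lt_IZR in H. assert (0 <= Int_part (INR N * x))%Z by (apply Int_part_nonneg; nra). lia. Qed.

Lemma box_eq N x y : (0 < N)%nat -> 0 <= x < 1 -> 0 <= y < 1 ->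
  Z.to_nat (Int_part (INR N * x)) = Z.to_nat (Int_part (INR N * y)) -> Rabs (x - y) <= / INR N.
Proof. intros HN Hx Hy He. assert (HNr : 0 < INR N) by (apply lt_0_INR; auto).
  assert (0 <= Int_part (INR N * x))%Z by (apply Int_part_nonneg; nra).
  assert (0 <= Int_part (INR N * y))%Z by (apply Int_part_nonneg; nra).
  assert (E : Int_part (INR N * x) = Int_part (INR N * y)) by lia.
  destruct (base_Int_part (INR N * x)) as [H1 H2].
  destruct (base_Int_part (INR N * y)) as [H3 H4]. rewrite E in H1, H2.
  assert (Rabs (INR N * x - INR N * y) <= 1) by (apply Rabs_le; lra).
  replace (INR N * x - INR N * y) with (INR N * (x - y)) in H5 by ring.
  rewrite Rabs_mult, Rabs_right in H5 by lra.
  apply (Rmult_le_reg_l (INR N)); auto. rewrite Rinv_r; lra. Qed.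

Lemma Rs_approx (F : (nat -> R) -> nat -> R) d2 i c e : forall js,
  (forall t, In t js -> Rabs ((F (u d2 t) c - IZR (Int_part (F (u d2 t) c))) -
                               (F (u d2 i) c - IZR (Int_part (F (u d2 i) c)))) <= e) ->
  exists D, isInt (Rs F d2 i c js - D) /\ Rabs D <= INR (length js) * e.
Proof. induction js as [|j js IH]; intros H.
  - exists 0. split. simpl. apply (isInt_eq 0). ring. apply isInt_0. simpl. rewrite Rabs_R0. lra.
  - destruct IH as [D [HD1 HD2]]. intros; apply H; simpl; auto.
    set (fj := F (u d2 j) c - IZR (Int_part (F (u d2 j) c))).
    set (fi := F (u d2 i) c - IZR (Int_part (F (u d2 i) c))).
    exists ((fj - fi) + D). split.
    + simpl Rs. fold (Rs F d2 i c js).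
      apply (isInt_eq (IZR (Int_part (F (u d2 j) c) - Int_part (F (u d2 i) c)) + (Rs F d2 i c js - D))).
      rewrite minus_IZR. unfold fj, fi. ring. apply isInt_plus; auto. eexists; eauto.
    + cbn [length]. rewrite S_INR. eapply Rle_trans. apply Rabs_triang.
      assert (Rabs (fj - fi) <= e) by (apply H; simpl; auto). lra. Qed.

Lemma IZR_le_INR z : IZR z <= INR (Z.to_nat z).
Proof. destruct (Z_lt_le_dec z 0). apply IZR_lt in l. pose proof (pos_INR (Z.to_nat z)). lra.
  rewrite INR_IZR_INZ, Z2Nat.id by lia. lra. Qed.

Lemma eta_bounds m M : (1 <= M)%nat -> (forall M', m = Some M' -> (M <= M')%nat) -> 0 <= eta m < 1.
Proof. intros HM Hm. destruct m as [M'|]; unfold eta; [|lra]. specialize (Hm M' eq_refl).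
  assert (1 < 2 ^ (100 * M')) by (apply Rlt_pow_R1; [lra|lia]).
  split. left; apply Rinv_0_lt_compat; lra.
  rewrite <- Rinv_1. apply Rinv_lt_contravar; lra. Qed.

Lemma sumOthers_val m M d2 i js : NoDup (i :: js) -> (forall t, In t js -> (t < M)%nat) ->
  (forall M', m = Some M' -> (M <= M')%nat) -> 0 <= d2 <= 1/2 ->
  sumOthers m (Sf d2 i js) i = INR (length js) * d2.
Proof. intros Hnd Hjs Hm Hd.
  assert (Hg : forall j, (if Nat.eq_dec j i then 0 else distZ (Sf d2 i js j)) = indf d2 js j).
  { intros j. destruct (Nat.eq_dec j i). subst. unfold indf. inversion Hnd; subst.
    destruct (in_dec Nat.eq_dec i js); tauto.
    rewrite Sf_val by auto. destruct (Nat.eqb_spec j i); [tauto|]. unfold indf.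
    destruct (in_dec Nat.eq_dec j js); apply distZ_small; lra. }
  assert (Hnd' : NoDup js) by (inversion Hnd; auto).
  assert (Hz : forall j, (M <= j)%nat -> indf d2 js j = 0).
  { intros j Hj. unfold indf. destruct (in_dec Nat.eq_dec j js) as [h|]; auto. apply Hjs in h. lia. }
  unfold sumOthers. destruct m as [M'|].
  - rewrite (fsum_ext _ (indf d2 js)) by auto. rewrite (fsum_zero_tail _ M); auto.
    apply fsum_ind; auto.
  - apply is_series_unique. rewrite <- (fsum_ind d2 js M) by auto.
    rewrite (fsum_ext _ _ M (fun j _ => eq_sym (Hg j))).
    apply is_series_fin. intros j Hj. rewrite Hg. auto. Qed.

Definition Nf (q : nat) (eps : R) : nat := S (Z.to_nat (up (INR q / eps))).

Theorem mainTheorem3 :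
  exists c : R, 0 < c /\
  forall d1 d2 : R, 0 < d1 -> d1 < c -> 0 < d2 -> d2 < c ->
    (exists q : nat, d1 = INR q * d2) -> d2 < d1 ^ 3 ->
    exists g : nat -> R -> nat,
      forall (k : nat) (eps : R), 0 < eps ->
      forall m : natinf, gtN m (g k eps) ->
      forall F : (nat -> R) -> nat -> R, isHomRep m k F ->
        exists s : nat -> R, inL1 m s /\ inS d1 d2 m s /\
          (forall j, (j < k)%nat -> distZ (F s j) < eps).
Proof.
  exists (1/4). split. lra. intros d1 d2 Hd1 Hd1c Hd2 Hd2c [q Hq] _.
  exists (fun k eps => (Nf q eps ^ k * q)%nat). intros k eps Heps m Hm F HF.
  set (N := Nf q eps). set (M := S (N ^ k * q)).
  assert (HNpos : (0 < N)%nat) by (unfold N, Nf; lia).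
  assert (Hm' : forall M', m = Some M' -> (M <= M')%nat).
  { intros M' ->. simpl in Hm. unfold M, N. lia. }
  assert (Hq1 : (1 <= q)%nat).
  { destruct q. simpl in Hq. lra. lia. }
  set (fr := fun t c => F (u d2 t) c - IZR (Int_part (F (u d2 t) c))).
  set (box := fun n c => Z.to_nat (Int_part (INR N * fr n c))).
  assert (HN : forall n c, (box n c < N)%nat).
  { intros n c. apply box_lt; auto. apply frac_bounds. }
  destruct (phpK box N HN k q (seq 0 M)) as [l' [Hincl [Hnd [Hlen Hbox]]]].
  { rewrite length_seq. unfold M. lia. } { apply seq_NoDup. }
  destruct l' as [|i rest]. { simpl in Hlen; lia. }
  assert (HltM : forall t, In t (i :: rest) -> (t < M)%nat).
  { intros t Ht. apply Hincl in Ht. apply in_seq in Ht. lia. }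
  set (js := firstn q rest).
  assert (Hsplit : js ++ skipn q rest = rest) by apply firstn_skipn.
  assert (Hinjs : forall t, In t js -> In t rest).
  { intros t Ht. rewrite <- Hsplit. apply in_or_app; auto. }
  assert (Hlenjs : length js = q).
  { unfold js. rewrite length_firstn. simpl in Hlen. lia. }
  assert (Hndjs : NoDup (i :: js)).
  { apply NoDup_cons_iff in Hnd as [Hn1 Hn2]. constructor. intros h; apply Hn1; auto.
    apply (NoDup_app_remove_r _ (skipn q rest)). rewrite Hsplit; auto. }
  assert (HiM : (i < M)%nat) by (apply HltM; simpl; auto).
  assert (HjsM : forall t, In t js -> (t < M)%nat) by (intros; apply HltM; simpl; auto).
  exists (Sf d2 i js). split; [|split].
  - apply (inL1_supp m M); auto. apply Sf_supp; auto.
  - destruct (eta_bounds m M) as [He1 He2]; auto. unfold M; lia.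
    unfold inS. set (w := (2 - eta m) * d2).
    assert (Hw : d2 < w) by (unfold w; nra).
    exists i. split; [|split; [|split]].
    + destruct m; simpl; auto. specialize (Hm' n eq_refl). lia.
    + rewrite Sf_val by auto. rewrite Nat.eqb_refl, Hlenjs, <- Hq. exists 0%Z. simpl. lra.
    + intros j _ Hji. rewrite Sf_val by auto. destruct (Nat.eqb_spec j i); [tauto|].
      unfold indf. exists 0%Z. destruct (in_dec Nat.eq_dec j js); simpl; lra.
    + rewrite (sumOthers_val m M) by (auto; lra). rewrite Hlenjs, <- Hq. lra.
  - intros c Hc.
    pose proof (F_rel m k F d2 i M HF Hm' HiM js HjsM c Hc) as H1.
    destruct (Rs_approx F d2 i c (/ INR N) js) as [D [HD1 HD2]].
    { intros t Ht. apply box_eq; auto; try apply frac_bounds.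
      apply (Hbox c Hc t i); simpl; auto. }
    destruct (isInt_plus _ _ H1 HD1) as [n Hn].
    eapply Rle_lt_trans. apply (distZ_le _ n). rewrite <- Hn.
    replace (F (Sf d2 i js) c - (F (Sf d2 i js) c - Rs F d2 i c js + (Rs F d2 i c js - D))) with D by ring.
    eapply Rle_lt_trans. apply HD2. rewrite Hlenjs.
    assert (HNr : 0 < INR N) by (apply lt_0_INR; auto).
    assert (INR q / eps < INR N).
    { unfold N, Nf. rewrite S_INR. pose proof (archimed (INR q / eps)) as [A _].
      pose proof (IZR_le_INR (up (INR q / eps))). lra. }
    apply (Rmult_lt_reg_r (INR N)); auto. rewrite Rmult_assoc, Rinv_l by lra.
    apply (Rmult_lt_compat_r eps) in H; auto. unfold Rdiv in H.
    rewrite Rmult_assoc, Rinv_l in H by lra. lra. Qed.
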